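(* Let $G=(V,E)$ be an undirected weighted graph with vertex set $V$ of size $n$, where each edge $\{i,j\}$ carries a nonnegative weight $w_{ij}=w_{ji}$ (with $w_{ij}=0$ if there is no edge) and each vertex $i$ carries an attribute vector $x_i\in\mathbb{R}^d$. Define the normalized adjacency matrix $A$ by $$A_{ij}=\begin{cases}\dfrac{w_{ij}}{\sum_{i\le j} w_{ij}}, & i=j,\\[2mm] \dfrac{w_{ij}}{2\sum_{i\le j} w_{ij}}, & i\neq j,\end{cases}$$ and set $A_{i\cdot}=\sum_j A_{ij}$, $A_{\cdot j}=\sum_i A_{ij}$, and $d(x,y)=\|x-y\|$ (Euclidean norm). Let $(X,Y)$ be a pair of random vectors in $\mathbb{R}^d$ with joint distribution $$P(X=x,Y=y)=\sum_{\substack{i,j\in V\\ x_i=x,\ x_j=y}} A_{ij}.$$ Then the squared distance correlation of $X$ and $Y$, i.e. the squared vector assortativity $$r^2=\frac{\mathrm{dCov}^2(X,Y)}{\big(\mathrm{dCov}^2(X,X)\,\mathrm{dCov}^2(Y,Y)\big)^{1/2}},$$ equals $r^2=f_1/f_2$, where $$f_1=\sum_{i',j'}\sum_{i,j}A_{ij}A_{i'j'}\,d(x_i,x_{i'})\,d(x_j,x_{j'})-2\sum_{i,j}A_{ij}\Big(\sum_{i'}A_{i'\cdot}\,d(x_i,x_{i'})\Big)\Big(\sum_{j'}A_{\cdot j'}\,d(x_j,x_{j'})\Big)+\Big(\sum_{i,i'}A_{i\cdot}A_{i'\cdot}\,d(x_i,x_{i'})\Big)^2,$$ $$f_2=\s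um_{i,i'}A_{i\cdot}A_{i'\cdot}\,\big(d(x_i,x_{i'})\big)^2-2\sum_{i}A_{i\cdot}\Big(\sum_{i'}A_{i'\cdot}\,d(x_i,x_{i'})\Big)^2+\Big(\sum_{i,i'}A_{i\cdot}A_{i'\cdot}\,d(x_i,x_{i'})\Big)^2.$$
   Context: Distance covariance (in the form of Lyons): for random vectors $(X,Y)$ with marginal laws $\mu,\nu$ and finite first moments, let $(X',Y')$ be an independent copy of $(X,Y)$. Set $a_\mu(x)=E_{X'}\|x-X'\|$, $D(\mu)=E\|X-X'\|$, and $d_\mu(x,x')=\|x-x'\|-a_\mu(x)-a_\mu(x')+D(\mu)$, and similarly $a_\nu$, $D(\nu)$, $d_\nu$ for $Y$. Then $\mathrm{dCov}^2(X,Y)=E[d_\mu(X,X')\,d_\nu(Y,Y')]$, $\mathrm{dCov}^2(X,X)=E[d_\mu(X,X')^2]$, $\mathrm{dCov}^2(Y,Y)=E[d_\nu(Y,Y')^2]$. The distance correlation squared is $\mathrm{dCov}^2(X,Y)/(\mathrm{dCov}^2(X,X)\,\mathrm{dCov}^2(Y,Y))^{1/2}$ (defined when the denominator is positive). Note that the joint distribution of $(X,Y)$ is symmetric, so $X$ and $Y$ have the same marginal law, given by $P(X=x)=\sum_{i:\,x_i=x}A_{i\cdot}$. *)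

(* Defs.v *)
From HB Require Import structures.
From mathcomp Require Import all_boot all_order all_algebra.
From mathcomp Require Import reals.
Set Implicit Arguments. Unset Strict Implicit. Unset Printing Implicit Defensive.
Import Order.TTheory GRing.Theory Num.Theory.
Local Open Scope ring_scope.

Section Defs.
Variable R : realType.

Definition euclid_norm (d : nat) (v : 'rV[R]_d) : R :=
  Num.sqrt (\sum_(k < d) v ord0 k ^+ 2).
Definition dist (d : nat) (u v : 'rV[R]_d) : R := euclid_norm (u - v).

(* A joint law of (X,Y) on R^d x R^d is given by its mass function
   p u v = P(X = u, Y = v), vanishing outside s x s for a uniq seq s. *)
Section DCov.
Variables (d : nat) (s : seq 'rV[R]_d) (p : 'rV[R]_d -> 'rV[R]_d -> R).

Definition marg1 (u : 'rV[R]_d) : R := \sum_(v <- s) p u v.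
Definition marg2 (v : 'rV[R]_d) : R := \sum_(u <- s) p u v.

Definition a_of (m : 'rV[R]_d -> R) (x : 'rV[R]_d) : R :=
  \sum_(u <- s) m u * dist x u.
Definition D_of (m : 'rV[R]_d -> R) : R :=
  \sum_(u <- s) \sum_(u' <- s) m u * m u' * dist u u'.
Definition dcent (m : 'rV[R]_d -> R) (x x' : 'rV[R]_d) : R :=
  dist x x' - a_of m x - a_of m x' + D_of m.

(* dCov^2(X,Y) = E[d_mu(X,X') d_nu(Y,Y')], (X',Y') an independent copy *)
Definition dCov2 : R :=
  \sum_(u <- s) \sum_(v <- s) \sum_(u' <- s) \sum_(v' <- s)
    p u v * p u' v' * dcent marg1 u u' * dcent marg2 v v'.
End DCov.

(* joint law of (Z,Z) when Z has law m *)
Definition diag_law (d : nat) (m : 'rV[R]_d -> R) (u v : 'rV[R]_d) : R :=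
  if u == v then m u else 0.

Definition dCor2 (d : nat) (s : seq 'rV[R]_d) (p : 'rV[R]_d -> 'rV[R]_d -> R) : R :=
  dCov2 s p /
  Num.sqrt (dCov2 s (diag_law (marg1 s p)) * dCov2 s (diag_law (marg2 s p))).

Section Graph.
Variables (n d : nat) (w : 'I_n -> 'I_n -> R) (x : 'I_n -> 'rV[R]_d).

Definition total_weight : R := \sum_(i < n) \sum_(j < n | (i <= j)%N) w i j.

Definition normA (i j : 'I_n) : R :=
  if i == j then w i j / total_weight else w i j / (2 * total_weight).

Definition Arow (i : 'I_n) : R := \sum_(j < n) normA i j.
Definition Acol (j : 'I_n) : R := \sum_(i < n) normA i j.

Definition attr_support : seq 'rV[R]_d := undup [seq x i | i <- enum 'I_n].

Definition attr_law (u v : 'rV[R]_d) : R :=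
  \sum_(i < n) \sum_(j < n | (x i == u) && (x j == v)) normA i j.

Definition dx (i i' : 'I_n) : R := dist (x i) (x i').

Definition f1 : R :=
  \sum_(i' < n) \sum_(j' < n) \sum_(i < n) \sum_(j < n)
      normA i j * normA i' j' * dx i i' * dx j j'
  - 2 * \sum_(i < n) \sum_(j < n)
      normA i j * (\sum_(i' < n) Arow i' * dx i i')
                * (\sum_(j' < n) Acol j' * dx j j')
  + (\sum_(i < n) \sum_(i' < n) Arow i * Arow i' * dx i i') ^+ 2.

Definition f2 : R :=
  \sum_(i < n) \sum_(i' < n) Arow i * Arow i' * dx i i' ^+ 2
  - 2 * \sum_(i < n) Arow i * (\sum_(i' < n) Arow i' * dx i i') ^+ 2
  + (\sum_(i < n) \sum_(i' < n) Arow i * Arow i' * dx i i') ^+ 2.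
End Graph.
End Defs.

(* Main.v *)
Require Import Defs.
From HB Require Import structures.
From mathcomp Require Import all_boot all_order all_algebra.
From mathcomp Require Import reals.
From mathcomp Require Import ring.
Import Order.TTheory GRing.Theory Num.Theory.
Local Open Scope ring_scope.
Set Implicit Arguments. Unset Strict Implicit.

Section Aux.
Variable R : realType.

Lemma sum_ind (T : eqType) (s : seq T) (a : T) (g : T -> R) :
  uniq s -> a \in s -> \sum_(u <- s) (a == u)%:R * g u = g a.
Proof.
move=> us ais; rewrite (big_rem a) //= eqxx mul1r big_seq big1 ?addr0 //.
move=> u; rewrite (mem_rem_uniq _ us) => /andP[neq _].
by rewrite eq_sym (negbTE neq) mul0r.
Qed.

Lemma exch4 (I J K L : Type) (ri : seq I) (rj : seq J) (rk : seq K) (rl : seq L)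
  (F : I -> J -> K -> L -> R) :
  \sum_(i <- ri) \sum_(j <- rj) \sum_(k <- rk) \sum_(l <- rl) F i j k l =
  \sum_(k <- rk) \sum_(l <- rl) \sum_(i <- ri) \sum_(j <- rj) F i j k l.
Proof.
transitivity (\sum_(i <- ri) \sum_(k <- rk) \sum_(j <- rj) \sum_(l <- rl) F i j k l).
  by apply: eq_bigr => i _; rewrite exchange_big.
rewrite exchange_big; apply: eq_bigr => k _.
transitivity (\sum_(i <- ri) \sum_(l <- rl) \sum_(j <- rj) F i j k l).
  by apply: eq_bigr => i _; rewrite exchange_big.
by rewrite exchange_big.
Qed.

Section Gen.
Variable I : finType.

Definition ex1 (r : I -> R) (dd : I -> I -> R) i := \sum_k r k * dd i k.
Definition dD (r : I -> R) (dd : I -> I -> R) := \sum_i \sum_k r i * r k * dd i k.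
Definition dc r dd i k := dd i k - ex1 r dd i - ex1 r dd k + dD r dd.
Definition S4 (B : I -> I -> R) r c dd :=
  \sum_i \sum_j \sum_k \sum_l B i j * B k l * dc r dd i k * dc c dd j l.

Variables (B : I -> I -> R) (r c : I -> R) (dd : I -> I -> R).
Hypotheses (hr : forall i, \sum_j B i j = r i) (hc : forall j, \sum_i B i j = c j)
  (h1 : \sum_i r i = 1) (hsym : forall i j, dd i j = dd j i).

Lemma hc1 : \sum_j c j = 1.
Proof.
rewrite -h1 -(eq_bigr _ (fun j _ => hc j)) exchange_big.
by apply: eq_bigr => i _; rewrite hr.
Qed.

Lemma E2r (g : I -> R) : \sum_k \sum_l B k l * g k = \sum_k r k * g k.
Proof. by apply: eq_bigr => k _; rewrite -mulr_suml hr. Qed.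

Lemma E2c (g : I -> R) : \sum_k \sum_l B k l * g l = \sum_l c l * g l.
Proof. by rewrite exchange_big; apply: eq_bigr => l _; rewrite -mulr_suml hc. Qed.

Lemma sumD (I0 : Type) (s : seq I0) (f g : I0 -> R) :
  \sum_(i <- s) (f i + g i) = \sum_(i <- s) f i + \sum_(i <- s) g i.
Proof. exact: big_split. Qed.

Lemma E2lin (f g : I -> I -> R) :
  \sum_k \sum_l B k l * (f k l + g k l) =
  \sum_k \sum_l B k l * f k l + \sum_k \sum_l B k l * g k l.
Proof.
rewrite -big_split; apply: eq_bigr => k _; rewrite -big_split.
by apply: eq_bigr => l _; rewrite mulrDr.
Qed.

Lemma E2Z (f : I -> I -> R) (a : R) :
  \sum_k \sum_l B k l * (a * f k l) = a * \sum_k \sum_l B k l * f k l.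
Proof.
rewrite mulr_sumr; apply: eq_bigr => k _; rewrite mulr_sumr.
by apply: eq_bigr => l _; rewrite mulrCA.
Qed.

Lemma E2N (f : I -> I -> R) :
  \sum_k \sum_l B k l * (- f k l) = - \sum_k \sum_l B k l * f k l.
Proof.
rewrite -sumrN; apply: eq_bigr => k _; rewrite -sumrN.
by apply: eq_bigr => l _; rewrite mulrN.
Qed.

Lemma E21 (a : R) : \sum_k \sum_l B k l * a = a.
Proof. by rewrite (E2r (fun _ => a)) -mulr_suml h1 mul1r. Qed.

Lemma sum_rdd i : \sum_k r k * dd k i = ex1 r dd i.
Proof. by apply: eq_bigr => k _; rewrite hsym. Qed.
Lemma sum_cdd i : \sum_k c k * dd k i = ex1 c dd i.
Proof. by apply: eq_bigr => k _; rewrite hsym. Qed.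
Lemma sum_rex : \sum_k r k * ex1 r dd k = dD r dd.
Proof. by apply: eq_bigr => k _; rewrite /ex1 mulr_sumr; apply: eq_bigr => l _; rewrite mulrA. Qed.
Lemma sum_cex : \sum_k c k * ex1 c dd k = dD c dd.
Proof. by apply: eq_bigr => k _; rewrite /ex1 mulr_sumr; apply: eq_bigr => l _; rewrite mulrA. Qed.

Lemma inner_eq i j :
  \sum_k \sum_l B k l * (dc r dd i k * dc c dd j l) =
  \sum_k \sum_l B k l * ((dd i k - ex1 r dd k) * (dd j l - ex1 c dd l))
  - (dD r dd - ex1 r dd i) * (dD c dd - ex1 c dd j).
Proof.
set al := dD r dd - ex1 r dd i; set be := dD c dd - ex1 c dd j.
transitivity (\sum_k \sum_l B k l * ((dd i k - ex1 r dd k) * (dd j l - ex1 c dd l)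
   + (be * (dd i k - ex1 r dd k) + (al * (dd j l - ex1 c dd l) + al * be)))).
  apply: eq_bigr => k _; apply: eq_bigr => l _; congr (_ * _).
  by rewrite /dc /al /be; ring.
rewrite !E2lin !E2Z E21 E2r E2c.
have e1 : \sum_k r k * (dd i k - ex1 r dd k) = - al.
  rewrite /al (eq_bigr (fun k => r k * dd i k - r k * ex1 r dd k)); last first.
    by move=> k _; rewrite mulrBr.
  by rewrite sumrB sum_rex /ex1; ring.
have e2 : \sum_l c l * (dd j l - ex1 c dd l) = - be.
  rewrite /be (eq_bigr (fun k => c k * dd j k - c k * ex1 c dd k)); last first.
    by move=> k _; rewrite mulrBr.
  by rewrite sumrB sum_cex /ex1; ring.
rewrite e1 e2; ring.
Qed.
Lemma gen_eq :
  S4 B r c dd =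
  \sum_k \sum_l \sum_i \sum_j B i j * B k l * dd i k * dd j l
  - 2 * \sum_i \sum_j B i j * ex1 r dd i * ex1 c dd j + dD r dd * dD c dd.
Proof.
set M := \sum_i \sum_j B i j * ex1 r dd i * ex1 c dd j.
have eM : \sum_i \sum_j B i j * (ex1 r dd i * ex1 c dd j) = M.
  by apply: eq_bigr => i _; apply: eq_bigr => j _; rewrite mulrA.
transitivity (\sum_i \sum_j B i j * (\sum_k \sum_l B k l * (dc r dd i k * dc c dd j l))).
  apply: eq_bigr => i _; apply: eq_bigr => j _; rewrite mulr_sumr.
  apply: eq_bigr => k _; rewrite mulr_sumr.
  by apply: eq_bigr => l _; rewrite !mulrA.
under eq_bigr do under eq_bigr do rewrite inner_eq.
rewrite E2lin E2N.
have eQ : \sum_i \sum_j B i j * ((dD r dd - ex1 r dd i) * (dD c dd - ex1 c dd j))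
   = M - dD r dd * dD c dd.
  transitivity (\sum_i \sum_j B i j * (dD r dd * dD c dd + (- (dD r dd * ex1 c dd j)
      + (- (dD c dd * ex1 r dd i) + ex1 r dd i * ex1 c dd j)))).
    by apply: eq_bigr => i _; apply: eq_bigr => j _; congr (_ * _); ring.
  rewrite !E2lin !E2N !E2Z E21 eM E2r E2c sum_rex sum_cex; ring.
rewrite eQ.
have eP : \sum_i \sum_j B i j * (\sum_k \sum_l B k l *
     ((dd i k - ex1 r dd k) * (dd j l - ex1 c dd l))) =
   \sum_k \sum_l \sum_i \sum_j B i j * B k l * dd i k * dd j l - M.
  transitivity (\sum_i \sum_j \sum_k \sum_l B i j * (B k l *
     ((dd i k - ex1 r dd k) * (dd j l - ex1 c dd l)))).
    apply: eq_bigr => i _; apply: eq_bigr => j _; rewrite mulr_sumr.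
    by apply: eq_bigr => k _; rewrite mulr_sumr.
  rewrite exch4.
  transitivity (\sum_k \sum_l B k l * (\sum_i \sum_j B i j * (dd i k * dd j l
       + (- (ex1 c dd l * dd i k) + (- (ex1 r dd k * dd j l) + ex1 r dd k * ex1 c dd l))))).
    apply: eq_bigr => k _; apply: eq_bigr => l _; rewrite mulr_sumr.
    apply: eq_bigr => i _; rewrite mulr_sumr.
    by apply: eq_bigr => j _; rewrite mulrCA; congr (_ * _); congr (_ * _); ring.
  have inn k l : \sum_i \sum_j B i j * (dd i k * dd j l
       + (- (ex1 c dd l * dd i k) + (- (ex1 r dd k * dd j l) + ex1 r dd k * ex1 c dd l)))
     = \sum_i \sum_j B i j * (dd i k * dd j l) - ex1 r dd k * ex1 c dd l.
    rewrite !E2lin !E2N !E2Z E21.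
    rewrite (E2r (fun i => dd i k)) (E2c (fun j => dd j l)) sum_rdd sum_cdd; ring.
  under eq_bigr do under eq_bigr do rewrite inn.
  rewrite E2lin E2N eM; congr (_ - _).
  apply: eq_bigr => k _; apply: eq_bigr => l _; rewrite mulr_sumr.
  apply: eq_bigr => i _; rewrite mulr_sumr.
  by apply: eq_bigr => j _; rewrite !mulrA [B k l * _]mulrC.
rewrite eP; ring.
Qed.
End Gen.
Section FW.
Variables (d n : nat) (x : 'I_n -> 'rV[R]_d) (s : seq 'rV[R]_d)
  (q : 'rV[R]_d -> 'rV[R]_d -> R) (B : 'I_n -> 'I_n -> R) (r c : 'I_n -> R).
Hypotheses (H : forall F, \sum_(u <- s) \sum_(v <- s) q u v * F u v =
                          \sum_i \sum_j B i j * F (x i) (x j))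
  (hr : forall i, \sum_j B i j = r i) (hc : forall j, \sum_i B i j = c j).

Lemma marg1_sum G : \sum_(u <- s) marg1 s q u * G u = \sum_i r i * G (x i).
Proof.
under eq_bigr do rewrite /marg1 mulr_suml.
rewrite (H (fun u v => G u)); apply: eq_bigr => i _.
by rewrite -hr mulr_suml.
Qed.

Lemma marg2_sum G : \sum_(v <- s) marg2 s q v * G v = \sum_j c j * G (x j).
Proof.
under eq_bigr do rewrite /marg2 mulr_suml.
rewrite exchange_big (H (fun u v => G v)) exchange_big; apply: eq_bigr => j _.
by rewrite -hc mulr_suml.
Qed.

Lemma aD_gen (m : 'rV[R]_d -> R) (rr : 'I_n -> R)
  (hm : forall G, \sum_(u <- s) m u * G u = \sum_i rr i * G (x i)) :
  (forall i, a_of s m (x i) = ex1 rr (dx x) i) /\ D_of s m = dD rr (dx x).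
Proof.
have ha i : a_of s m (x i) = ex1 rr (dx x) i by rewrite /a_of hm.
split => //.
rewrite /D_of (eq_bigr (fun u => m u * a_of s m u)); last first.
  by move=> u _; rewrite /a_of mulr_sumr; apply: eq_bigr => v _; rewrite mulrA.
rewrite hm; under eq_bigr do rewrite ha.
exact: sum_rex.
Qed.

Lemma FW : dCov2 s q = S4 B r c (dx x).
Proof.
have [ha1 hD1] := aD_gen marg1_sum.
have [ha2 hD2] := aD_gen marg2_sum.
rewrite /dCov2.
transitivity (\sum_(u <- s) \sum_(v <- s) q u v * (\sum_(u' <- s) \sum_(v' <- s)
   q u' v' * (dcent s (marg1 s q) u u' * dcent s (marg2 s q) v v'))).
  apply: eq_bigr => u _; apply: eq_bigr => v _; rewrite mulr_sumr.
  apply: eq_bigr => u' _; rewrite mulr_sumr.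
  by apply: eq_bigr => v' _; rewrite !mulrA.
under eq_bigr do under eq_bigr do rewrite H.
rewrite H; apply: eq_bigr => i _; apply: eq_bigr => j _; rewrite mulr_sumr.
apply: eq_bigr => k _; rewrite mulr_sumr; apply: eq_bigr => l _.
by rewrite /dcent !ha1 !ha2 hD1 hD2 !mulrA.
Qed.
End FW.
Lemma col (I : finType) (i : I) (g : I -> R) : \sum_j (i == j)%:R * g j = g i.
Proof. by apply: sum_ind; [exact: index_enum_uniq | exact: mem_index_enum]. Qed.

Lemma dist_sym d (u v : 'rV[R]_d) : dist u v = dist v u.
Proof.
rewrite /dist /euclid_norm -opprB; congr Num.sqrt.
by apply: eq_bigr => k _; rewrite !mxE sqrrN.
Qed.

Section Graph.
Variables (n d : nat) (w : 'I_n -> 'I_n -> R) (x : 'I_n -> 'rV[R]_d).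
Hypotheses (w_ge0 : forall i j, 0 <= w i j) (w_sym : forall i j, w i j = w j i)
  (tw_gt0 : 0 < total_weight w).

Let s := attr_support x.
Lemma us : uniq s. Proof. exact: undup_uniq. Qed.
Lemma xs i : x i \in s.
Proof. by rewrite mem_undup; apply: map_f; rewrite mem_enum. Qed.

Lemma H_attr F : \sum_(u <- s) \sum_(v <- s) attr_law w x u v * F u v =
                 \sum_i \sum_j normA w i j * F (x i) (x j).
Proof.
transitivity (\sum_(u <- s) \sum_(v <- s) \sum_i \sum_j
   (x i == u)%:R * ((x j == v)%:R * (normA w i j * F (x i) (x j)))).
  apply: eq_bigr => u _; apply: eq_bigr => v _.
  rewrite /attr_law mulr_suml; apply: eq_bigr => i _.
  rewrite big_mkcond mulr_suml; apply: eq_bigr => j _.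
  by case: eqVneq => [<-|_]; case: eqVneq => [<-|_]; rewrite /= ?mul1r ?mul0r ?mulr0.
rewrite exch4; apply: eq_bigr => i _; apply: eq_bigr => j _.
under eq_bigr do rewrite -mulr_sumr (sum_ind _ us (xs j)).
by rewrite (sum_ind (fun _ => normA w i j * F (x i) (x j)) us (xs i)).
Qed.

Lemma normA_sym i j : normA w i j = normA w j i.
Proof. by rewrite /normA eq_sym w_sym. Qed.

Lemma Acol_Arow j : Acol w j = Arow w j.
Proof. by apply: eq_bigr => i _; rewrite normA_sym. Qed.

Lemma normA_ge0 i j : 0 <= normA w i j.
Proof.
rewrite /normA; case: eqVneq => _; apply: divr_ge0 => //; rewrite ?mulr_ge0 //;
  exact: ltW.
Qed.

Lemma Arow_ge0 i : 0 <= Arow w i.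
Proof. by apply: sumr_ge0 => j _; exact: normA_ge0. Qed.

Lemma sum_Arow : \sum_i Arow w i = 1.
Proof.
set T := total_weight w.
have Tn0 : T != 0 by rewrite gt_eqF.
set U := \sum_(i < n) \sum_(j < n | (i < j)%N) w i j.
have hT : T = \sum_i w i i + U.
  rewrite /T /total_weight -big_split; apply: eq_bigr => i _.
  rewrite (bigD1 i) //=; congr (_ + _); apply: eq_bigl => j.
  by rewrite ltn_neqAle eq_sym; case: (i <= j)%N; rewrite ?andbT ?andbF.
have hW : \sum_i \sum_j w i j = T + U.
  rewrite (eq_bigr (fun i : 'I_n => \sum_(j < n | (i <= j)%N) w i j
                      + \sum_(j < n | ~~ (i <= j)%N) w i j)); last first.
    by move=> i _; rewrite (bigID (fun j : 'I_n => (i <= j)%N)).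
  rewrite big_split /=; congr (_ + _).
  transitivity (\sum_(i < n) \sum_(j < n) (if (j < i)%N then w i j else 0)).
    by apply: eq_bigr => i _; rewrite big_mkcond; apply: eq_bigr => j _; rewrite ltnNge.
  rewrite exchange_big /U; apply: eq_bigr => i _; rewrite [RHS]big_mkcond.
  by apply: eq_bigr => j _; rewrite w_sym.
have e1 : \sum_i \sum_j w i j + \sum_i w i i = 2 * T.
  by rewrite hW hT; ring.
transitivity (\sum_(i < n) \sum_(j < n) (w i j + (i == j)%:R * w i j) * (2 * T)^-1).
  apply: eq_bigr => i _; apply: eq_bigr => j _; rewrite /normA.
  case: eqVneq => [<-|_]; rewrite ?mul1r ?mul0r ?addr0 //.
  by rewrite -/T; field; rewrite Tn0.
under eq_bigr do rewrite -mulr_suml big_split /= col.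
rewrite -mulr_suml big_split /= e1 divff //.
by rewrite mulf_neq0 // pnatr_eq0.
Qed.
Lemma H_diag (m : 'rV[R]_d -> R) (rr : 'I_n -> R)
  (hm : forall G, \sum_(u <- s) m u * G u = \sum_i rr i * G (x i)) F :
  \sum_(u <- s) \sum_(v <- s) diag_law m u v * F u v =
  \sum_i \sum_j ((i == j)%:R * rr i) * F (x i) (x j).
Proof.
transitivity (\sum_(u <- s) m u * F u u).
  rewrite big_seq [RHS]big_seq; apply: eq_bigr => u us'.
  rewrite -(sum_ind (fun v => m u * F u v) us us'); apply: eq_bigr => v _.
  by rewrite /diag_law; case: eqVneq => _; rewrite ?mul1r ?mul0r.
rewrite (hm (fun u => F u u)); apply: eq_bigr => i _.
rewrite -(col i (fun j => rr i * F (x i) (x j))); apply: eq_bigr => j _.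
by rewrite mulrA.
Qed.

Lemma dCov_attr : dCov2 s (attr_law w x) = f1 w x.
Proof.
rewrite (FW (r:=Arow w) (c:=Acol w) H_attr (fun i => erefl) (fun j => erefl)).
rewrite (gen_eq (r:=Arow w) (c:=Acol w) (fun i => erefl) (fun j => erefl) sum_Arow (fun i j => dist_sym _ _)).
rewrite /f1 expr2; congr (_ - _ + _ * _).
by rewrite /dD; apply: eq_bigr => i _; apply: eq_bigr => k _; rewrite !Acol_Arow.
Qed.

Definition Bd (i j : 'I_n) := (i == j)%:R * Arow w i.

Lemma rBd i : \sum_j Bd i j = Arow w i.
Proof. exact: (col i (fun _ => Arow w i)). Qed.
Lemma cBd j : \sum_i Bd i j = Arow w j.
Proof.
rewrite -(col j (Arow w)); apply: eq_bigr => i _; by rewrite /Bd eq_sym.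
Qed.

Lemma dCov_diag1 : dCov2 s (diag_law (marg1 s (attr_law w x))) = S4 Bd (Arow w) (Arow w) (dx x).
Proof.
apply: FW rBd cBd => F; apply: H_diag => G.
exact: (marg1_sum H_attr (fun i => erefl)).
Qed.

Lemma dCov_diag2 : dCov2 s (diag_law (marg2 s (attr_law w x))) = S4 Bd (Arow w) (Arow w) (dx x).
Proof.
apply: FW rBd cBd => F; apply: H_diag => G.
rewrite (marg2_sum (c:=Acol w) H_attr (fun j => erefl)).
by apply: eq_bigr => j _; rewrite Acol_Arow.
Qed.

Lemma S4_ge0 : 0 <= S4 Bd (Arow w) (Arow w) (dx x).
Proof.
apply: sumr_ge0 => i _; apply: sumr_ge0 => j _; apply: sumr_ge0 => k _;
  apply: sumr_ge0 => l _.
rewrite /Bd; case: eqVneq => [<-|_]; rewrite ?mul0r ?mul1r //.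
case: eqVneq => [<-|_]; rewrite ?mul0r ?mulr0 ?mul1r ?mul0r //.
rewrite -mulrA -expr2; apply: mulr_ge0; last exact: sqr_ge0.
by apply: mulr_ge0; apply: Arow_ge0.
Qed.

Lemma S4_f2 : S4 Bd (Arow w) (Arow w) (dx x) = f2 w x.
Proof.
rewrite (gen_eq rBd cBd sum_Arow (fun i j => dist_sym _ _)) /f2.
congr (_ - 2 * _ + _).
  transitivity (\sum_k \sum_l \sum_i Arow w i * Bd k l * dx x i k * dx x i l).
    apply: eq_bigr => k _; apply: eq_bigr => l _; apply: eq_bigr => i _.
    rewrite -(col i (fun j => Arow w i * Bd k l * dx x i k * dx x j l)).
    by apply: eq_bigr => j _; rewrite /Bd !mulrA.
  transitivity (\sum_k \sum_i Arow w i * Arow w k * dx x i k * dx x i k).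
    apply: eq_bigr => k _; rewrite exchange_big; apply: eq_bigr => i _.
    rewrite -(col k (fun l => Arow w i * Arow w k * dx x i k * dx x i l)).
    by apply: eq_bigr => l _; rewrite /Bd !mulrA [_ * Arow w i]mulrC.
  rewrite exchange_big; apply: eq_bigr => i _; apply: eq_bigr => k _.
  by rewrite -mulrA -expr2.
apply: eq_bigr => i _.
transitivity (Arow w i * ex1 (Arow w) (dx x) i * ex1 (Arow w) (dx x) i).
  rewrite -(col i (fun j => Arow w i * ex1 (Arow w) (dx x) i * ex1 (Arow w) (dx x) j)).
  by apply: eq_bigr => j _; rewrite /Bd !mulrA.
by rewrite expr2 mulrA.
Qed.
End Graph.
End Aux.

Theorem mainTheorem1 (R : realType) (n d : nat)
    (w : 'I_n -> 'I_n -> R) (x : 'I_n -> 'rV[R]_d)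
    (w_ge0 : forall i j, 0 <= w i j)
    (w_sym : forall i j, w i j = w j i)
    (tw_gt0 : 0 < total_weight w)
    (den_gt0 :
       0 < dCov2 (attr_support x) (diag_law (marg1 (attr_support x) (attr_law w x)))
           * dCov2 (attr_support x) (diag_law (marg2 (attr_support x) (attr_law w x)))) :
  dCor2 (attr_support x) (attr_law w x) = f1 w x / f2 w x.
Proof.
rewrite /dCor2 dCov_attr // dCov_diag1 // dCov_diag2 // -expr2 sqrtr_sqr.
rewrite ger0_norm; last exact: S4_ge0.
by rewrite S4_f2.
Qed.
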